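(* Let $k\ge 1$, let $d=k+1$, and let $A$ be a $d\times d$ matrix with entries in $\{0,1\}$ which is primitive (i.e. $A^p$ has all entries positive for some integer $p\ge1$). Then $A\in P^*(k)$ if and only if $A$ has a positive row, i.e. there is $i_0\in D$ with $A(i_0,j)=1$ for all $j\in D$.
   Context: Let $K=\{1,\dots,k\}$ and $D=\{1,\dots,d\}$. The $k$-tree $\tau$ is the set $K^*$ of all finite words over $K$; the empty word $\epsilon$ is the root, and for a word $x$ and $g\in K$ the word $xg$ is a child of $x$. $L_n$ denotes the set of words of length exactly $n$. For a $d\times d$ $0,1$ matrix $A$, let $X_A=\{\lambda\in D^{\tau}: A(\lambda(x),\lambda(xg))>0 \text{ for all } x\in\tau,\ g\in K\}$. For $i\in D$ and $\mathcal T\subseteq\tau$, the arrival set is $\mathcal A(i,\epsilon,\mathcal T)=\{\lambda|_{\mathcal T}:\lambda\in X_A,\ \lambda(\epsilon)=i\}$. The matrix $A$ is in $P^*(k,n)$ if $\mathcal A(i,\epsilon,L_n)=D^{L_n}$ for every $i\in D$ (i.e. every labeling of $L_n$ by $D$ is achievable from every root symbol), and $P^*(k)=\bigcup_{n\ge0}P^*(k,n)$. *)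

(* Defs.v *)
From mathcomp Require Import all_boot all_order all_algebra.
Set Implicit Arguments. Unset Strict Implicit. Unset Printing Implicit Defensive.
Import Order.TTheory GRing.Theory Num.Theory.
Local Open Scope ring_scope.

(* Alphabet K = {1..k} is 'I_k, symbol set D = {1..d} is 'I_d.
   The k-tree tau is seq 'I_k (finite words); the root is [::] and the
   children of x are rcons x g (i.e. the word xg).  L_n (words of length n) is n.-tuple 'I_k. *)

Definition XA (k d : nat) (A : 'M[int]_d) (lam : seq 'I_k -> 'I_d) : Prop :=
  forall (x : seq 'I_k) (g : 'I_k), 0 < A (lam x) (lam (rcons x g)).

Definition arrival (k d : nat) (A : 'M[int]_d) (i : 'I_d) (n : nat)
    (f : n.-tuple 'I_k -> 'I_d) : Prop :=
  exists lam : seq 'I_k -> 'I_d,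
    XA A lam /\ lam [::] = i /\ forall x : n.-tuple 'I_k, lam (tval x) = f x.

Definition Pstar_n (k d : nat) (A : 'M[int]_d) (n : nat) : Prop :=
  forall (i : 'I_d) (f : n.-tuple 'I_k -> 'I_d), arrival A i f.

Definition Pstar (k d : nat) (A : 'M[int]_d) : Prop :=
  exists n : nat, @Pstar_n k d A n.

Definition primitive_mx (d : nat) (A : 'M[int]_d.+1) : Prop :=
  exists p : nat, (0 < p)%N /\ forall i j, 0 < (A ^+ p) i j.

(* Main.v *)
Require Import Defs.
From mathcomp Require Import all_boot all_order all_algebra.
From mathcomp Require Import zify.
Import Order.TTheory GRing.Theory Num.Theory.
Local Open Scope ring_scope.

Lemma path_of_pow (d : nat) (A : 'M[int]_(d.+1))
  (h01 : forall i j, A i j = 0 \/ A i j = 1) (m : nat) :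
  forall i j, 0 < (A ^+ m) i j ->
  exists pth : nat -> 'I_(d.+1), pth 0%N = i /\ pth m = j /\
    forall t, (t < m)%N -> 0 < A (pth t) (pth t.+1).
Proof.
elim: m => [|m IH] i j.
  rewrite expr0 mxE.
  case: eqP => [->|]; last by rewrite mulr0n.
  by move=> _; exists (fun _ => j).
rewrite exprS -mulmxE mxE => hs.
have [/existsP [l hl]|hn] := boolP [exists l, 0 < A i l * (A ^+ m) l j].
  have hil : A i l = 1.
    case: (h01 i l) hl => -> //; by rewrite mul0r.
  move: hl; rewrite hil mul1r => /IH [pth [h0 [hm ht]]].
  exists (fun t => if t is t'.+1 then pth t' else i); split=> //; split=> //.
  case=> [|t] /=; first by rewrite h0 hil.
  by move=> htm; apply: ht.
exfalso; move: hs; apply/negP; rewrite -leNgt.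
apply: sumr_le0 => l _; rewrite leNgt; apply/negP => hl.
by move/existsP: hn; apply; exists l.
Qed.

Arguments path_of_pow {d A} h01 {m i j}.

Definition Pc {k : nat} (A : 'M[int]_(k.+1)) (c j : 'I_(k.+1)) : bool :=
  [forall g : 'I_k, 0 < A j (lift c g)].

Lemma two_full (k : nat) (A : 'M[int]_(k.+1)) (c1 c2 j : 'I_(k.+1)) :
  c1 != c2 -> Pc A c1 j -> Pc A c2 j -> forall e, 0 < A j e.
Proof.
move=> hne /forallP h1 /forallP h2 e.
case: (unliftP c1 e) => [g ->|he]; first exact: h1.
case: (unliftP c2 e) => [g ->|he2]; first exact: h2.
by move: hne; rewrite -he -he2 eqxx.
Qed.

Arguments two_full {k A c1 c2 j}.

Fixpoint Fz {k : nat} (h : 'I_(k.+1) -> 'I_(k.+1)) (n : nat) :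
  'I_(k.+1) -> n.-tuple 'I_k -> 'I_(k.+1) :=
  match n with
  | 0 => fun b _ => b
  | n'.+1 => fun b x => Fz h n' (lift (h b) (thead x)) (behead_tuple x)
  end.

Lemma force (k : nat) (A : 'M[int]_(k.+1)) (h : 'I_(k.+1) -> 'I_(k.+1))
  (hJ : forall b j, Pc A (h b) j -> j = b) (n : nat) :
  forall b (lam : seq 'I_k -> 'I_(k.+1)) y, XA A lam ->
  (forall x : n.-tuple 'I_k, lam (y ++ x) = Fz h n b x) -> lam y = b.
Proof.
elim: n => [|n IH] b lam y hX hx.
  by have := hx [tuple]; rewrite cats0.
apply: hJ; apply/forallP => g.
have -> : lift (h b) g = lam (rcons y g).
  symmetry; apply: (IH _ lam) => // x'.
  rewrite -cats1 -catA /=.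
  have := hx (cons_tuple g x'); rewrite /= => ->.
  rewrite theadE; congr Fz; exact: val_inj.
exact: hX.
Qed.

Arguments force {k A h} hJ {n} b lam y.

Theorem proposition2p4 (k : nat) (hk : (1 <= k)%N) (A : 'M[int]_(k.+1))
  (h01 : forall i j, A i j = 0 \/ A i j = 1)
  (hprim : primitive_mx A) :
  Pstar k A <-> exists i0 : 'I_(k.+1), forall j : 'I_(k.+1), A i0 j = 1.
Proof.
have pos1 : forall i j, 0 < A i j -> A i j = 1.
  by move=> i j; case: (h01 i j) => ->.
have g0 : 'I_k by case: k hk {A h01 hprim pos1} => // k' _; exact: ord0.
have o0max : (ord0 : 'I_(k.+1)) != ord_max.
  by apply/eqP => /(congr1 val) /=; case: k hk {A h01 hprim pos1 g0}.
split.
- move=> [n hn].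
  case: (boolP [exists i0, [forall j, A i0 j == 1]]) =>
     [/existsP [i0 /forallP H]|hnf]; first by exists i0 => j; apply/eqP.
  exfalso.
  have nofull : forall j, ~ (forall e, 0 < A j e).
    move=> j hj; move/existsP: hnf; apply; exists j; apply/forallP => e.
    by rewrite pos1.
  case: (boolP [forall c, [exists j, Pc A c j]]) => [/forallP hall|].
  + pose J c := odflt c [pick j | Pc A c j].
    have hJc : forall c, Pc A c (J c).
      move=> c; rewrite /J; case: pickP => //= hno.
      by move/existsP: (hall c) => [j]; rewrite hno.
    have Jinj : injective J.
      move=> c1 c2 e; apply/eqP; apply/negPn/negP => hne.
      apply: (nofull (J c1)); apply: (two_full hne) => //; rewrite e; exact: hJc.
    have [h hJh hhJ] := injF_bij Jinj.
    have hJ : forall b j, Pc A (h b) j -> j = b.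
      move=> b j hp; apply/eqP; apply/negPn/negP => hne.
      have hp2 : Pc A (h j) j by have := hJc (h j); rewrite hhJ.
      have hne2 : h j != h b.
        by apply/eqP => e; move: hne; rewrite -(hhJ j) e hhJ eqxx.
      by apply: (nofull j); apply: two_full hne2 hp2 hp.
    have [lam [hX [h0 hl]]] := hn ord0 (Fz h n ord_max).
    have := force hJ ord_max lam [::] hX hl.
    by rewrite h0 => e; move: o0max; rewrite e eqxx.
  + move/forallPn => [c /existsPn hc].
    case: n hn => [|n'] hn.
      have [lam [hX [h0 hl]]] := hn ord0 (fun _ => ord_max).
      have := hl [tuple]; rewrite /= h0 => e; by move: o0max; rewrite e eqxx.
    pose y := nseq n' g0.
    have [lam [hX [h0 hl]]] :=
      hn ord0 (fun x : n'.+1.-tuple 'I_k => lift c (last g0 (tval x))).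
    move: (hc (lam y)); apply/negP/negPn/forallP => g.
    have sz : size (rcons y g) == n'.+1 by rewrite size_rcons size_nseq.
    have := hl (Tuple sz); rewrite /= last_rcons => <-.
    exact: hX.
- move=> [i0 hi0]; have [p [p0 hp]] := hprim.
  pose S i := odflt i [pick l | 0 < A i l].
  have hS : forall i, 0 < A i (S i).
    move=> i; rewrite /S; case: pickP => //= hno.
    have [pth [h0 [_ ht]]] := path_of_pow h01 (hp i i).
    by have := ht 0%N p0; rewrite h0 hno.
  exists p.+1 => i f.
  have [pth [h0 [hpi ht]]] := path_of_pow h01 (hp i i0).
  pose F (s : seq 'I_k) := if insub s is Some t then f t else i0.
  exists (fun x => if (size x <= p)%N then pth (size x)
                   else iter (size x - p.+1) S (F (take p.+1 x))).
  split; [|split].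
  + move=> x g /=; rewrite size_rcons.
    case: (ltngtP (size x) p) => hs.
    * by apply: ht.
    *       have -> : ((size x).+1 - p.+1 = (size x - p.+1).+1)%N by lia.
      rewrite -cats1 takel_cat ?iterS; [exact: hS | lia].
    * by rewrite hs hpi hi0.
  + by rewrite /= h0.
  + move=> x; rewrite size_tuple ltnn subnn /=.
    have -> : take p.+1 x = x by rewrite -{1}(size_tuple x) take_size.
    by rewrite /F valK.
Qed.
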